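(* Let $f,g$ be parking functions and $F_f^*,F_g^*$ the dual basis elements in the graded dual $\mathrm{PSym}^*$ (whose product is the transpose of the coproduct of $\mathrm{PSym}$). Then $$F_f^*\cdot F_g^*=\sum_{h:\ f\backslash g\ \le_P\ h\ \le_P\ f/g}F_h^*.$$
   Context: $\mathrm{PBT}_n$: planar binary trees with $n+1$ leaves, numbered left to right; $\mathrm{Des}(t)=\{1\le i\le n-1:\text{the }(i+1)\text{-st leaf is a right child}\}$. For $\sigma\in S_n$, $\mathrm{Des}(\sigma)=\{i:\sigma(i)>\sigma(i+1)\}$, $\mathrm{Inv}(\sigma)=\{(i,j):i<j,\sigma(i)>\sigma(j)\}$. A parking function of degree $n$ is a pair $(\sigma,t)\in S_n\times \mathrm{PBT}_n$ with $\mathrm{Des}(t)\subseteq\mathrm{Des}(\sigma)$. Weak order $\sigma\le_w\tau$ iff $\mathrm{Inv}(\sigma)\subseteq\mathrm{Inv}(\tau)$; Tamari order $\le_T$: reflexive–transitive closure of replacing a subtree $x(A,y(B,C))$ by $x(y(A,B),C)$. Parking order: $(\sigma,s)\le_P(\tau,t)$ iff $\sigma\le_w\tau$ and $s\le_T t$. Splitting of binary trees: for $0\le i\le n$, with $P$ the path from the root to leaf $i+1$, ${}^it$ (resp. $t^i$) is obtained by deleting at each node of $P$ the child strictly to the right (resp. left) of the path with its subtree and contracting nodes with one child. For $f=(\sigma,t)$, ${}^if=(\mathrm{std}(\sigma(1)\cdots\sigma(i)),{}^it)$ and $f^i=(\mathrm{std}(\sigma(i+1)\cdots\sigma(n)),t^i)$,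 where $\mathrm{std}$ replaces the letters of a word with distinct letters by $1,2,\dots$ preserving relative order. $\mathrm{PSym}$ has basis $\{F_f\}$ over parking functions with coproduct $\Delta(F_f)=\sum_{i=0}^{n}F_{{}^if}\otimes F_{f^i}$. For $f=(\sigma,s)$ of degree $n$ and $g=(\tau,t)$ of degree $m$: $f/g=((\sigma(1)+m)\cdots(\sigma(n)+m)\tau(1)\cdots\tau(m),\ s/t)$ and $f\backslash g=(\sigma(1)\cdots\sigma(n)(\tau(1)+n)\cdots(\tau(m)+n),\ s\backslash t)$, where for trees $s/t$ identifies the root of $s$ with the leftmost leaf of $t$, and $s\backslash t$ identifies the root of $t$ with the rightmost leaf of $s$. *)

(* Defs.v *)
From HB Require Import structures.
From mathcomp Require Import all_boot.
Set Implicit Arguments. Unset Strict Implicit. Unset Printing Implicit Defensive.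

Inductive bt := Lf | Nd of bt & bt.

Fixpoint bt_eqb (s t : bt) : bool :=
  match s, t with
  | Lf, Lf => true
  | Nd l r, Nd l' r' => bt_eqb l l' && bt_eqb r r'
  | _, _ => false
  end.

Lemma bt_eqP : Equality.axiom bt_eqb.
Proof.
elim=> [|l IHl r IHr] [|l' r'] /=; try by constructor.
by apply: (iffP andP) => [[/IHl -> /IHr ->]|[<- <-]]; split; [apply/IHl|apply/IHr].
Qed.

HB.instance Definition _ := hasDecEq.Build bt bt_eqP.

(** number of internal nodes; a tree in PBT_n has n internal nodes (n+1 leaves) *)
Fixpoint nodes (t : bt) : nat :=
  match t with Lf => 0 | Nd l r => (nodes l + nodes r).+1 end.

Fixpoint leafdirs_aux (t : bt) (isright : bool) : seq bool :=
  match t with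
  | Lf => [:: isright]
  | Nd l r => leafdirs_aux l false ++ leafdirs_aux r true
  end.
Definition leafdirs (t : bt) := leafdirs_aux t false.

(** Des(t) = { 1 <= i <= n-1 : the (i+1)-st leaf is a right child } *)
Definition tdes (t : bt) : seq nat :=
  [seq i <- iota 1 (nodes t).-1 | nth false (leafdirs t) i].

(** Permutations of {1..n} as words sigma(1)...sigma(n). *)
Definition is_perm (s : seq nat) := perm_eq s (iota 1 (size s)).

(** Des(sigma) = { i : sigma(i) > sigma(i+1) } (1-indexed) *)
Definition pdes (s : seq nat) : seq nat :=
  [seq i <- iota 1 (size s).-1 | nth 0 s i < nth 0 s i.-1].

(** parking functions: pairs (sigma, t) *)
Definition pfun := (seq nat * bt)%type.
Definition pdeg (f : pfun) := size f.1.
Definition is_pf (f : pfun) : bool :=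
  [&& is_perm f.1, nodes f.2 == size f.1 & all (fun i => i \in pdes f.1) (tdes f.2)].

(** weak order: Inv(sigma) included in Inv(tau) (0-indexed positions) *)
Definition weak_le (s t : seq nat) : Prop :=
  size s = size t /\
  forall i j, i < j < size s -> nth 0 s j < nth 0 s i -> nth 0 t j < nth 0 t i.

Inductive tam_step : bt -> bt -> Prop :=
  | tam_root A B C : tam_step (Nd A (Nd B C)) (Nd (Nd A B) C)
  | tam_left l l' r : tam_step l l' -> tam_step (Nd l r) (Nd l' r)
  | tam_right l r r' : tam_step r r' -> tam_step (Nd l r) (Nd l r').

Inductive tam_le : bt -> bt -> Prop :=
  | tam_refl t : tam_le t t
  | tam_trans s t u : tam_step s t -> tam_le t u -> tam_le s u.

Definition park_le (f g : pfun) : Prop := weak_le f.1 g.1 /\ tam_le f.2 g.2.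

Definition std (s : seq nat) : seq nat :=
  [seq (count (fun y => y < x) s).+1 | x <- s].

(** splitting of trees along the path to leaf i+1 (leaves numbered from 1) *)
Fixpoint tsplitl (i : nat) (t : bt) : bt :=
  match t with
  | Lf => Lf
  | Nd l r => if i < (nodes l).+1 then tsplitl i l
              else Nd l (tsplitl (i - (nodes l).+1) r)
  end.
Fixpoint tsplitr (i : nat) (t : bt) : bt :=
  match t with
  | Lf => Lf
  | Nd l r => if i < (nodes l).+1 then Nd (tsplitr i l) r
              else tsplitr (i - (nodes l).+1) r
  end.

Definition psplitl (i : nat) (f : pfun) : pfun := (std (take i f.1), tsplitl i f.2).
Definition psplitr (i : nat) (f : pfun) : pfun := (std (drop i f.1), tsplitr i f.2).

(** tree grafting: s/t (root of s onto leftmost leaf of t), s\t (root of t onto rightmost leaf of s) *)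
Fixpoint tover (s t : bt) : bt :=
  match t with Lf => s | Nd l r => Nd (tover s l) r end.
Fixpoint tunder (s t : bt) : bt :=
  match s with Lf => t | Nd l r => Nd l (tunder r t) end.

Definition pover (f g : pfun) : pfun :=
  ([seq x + pdeg g | x <- f.1] ++ g.1, tover f.2 g.2).
Definition punder (f g : pfun) : pfun :=
  (f.1 ++ [seq x + pdeg f | x <- g.1], tunder f.2 g.2).

(** Coefficient of F_f (x) F_g in Delta(F_h) = sum_{i=0}^{deg h} F_{^i h} (x) F_{h^i}.
    By definition of the graded dual PSym^* (product = transpose of coproduct),
    this is exactly the coefficient of F_h^* in F_f^* . F_g^*. *)
Definition dual_prod_coef (f g h : pfun) : nat :=
  count (fun i => (psplitl i h == f) && (psplitr i h == g)) (iota 0 (pdeg h).+1).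

(* Main.v *)
Require Import Defs.
From mathcomp Require Import all_boot.
From mathcomp Require Import zify.
Set Implicit Arguments. Unset Strict Implicit. Unset Printing Implicit Defensive.


Lemma tam_step_le s t : tam_step s t -> tam_le s t.
Proof. by move=> H; apply: tam_trans H (tam_refl _). Qed.

Lemma tam_le_trans s t u : tam_le s t -> tam_le t u -> tam_le s u.
Proof. by elim=> // x y z Hxy _ IH Hzu; apply: tam_trans Hxy (IH Hzu). Qed.

Lemma tam_le_left l l' r : tam_le l l' -> tam_le (Nd l r) (Nd l' r).
Proof.
elim=> [t|x y z Hxy _ IH]; first exact: tam_refl.
by apply: tam_trans IH; apply: tam_left.
Qed.

Lemma tam_le_right l r r' : tam_le r r' -> tam_le (Nd l r) (Nd l r').
Proof.
elim=> [t|x y z Hxy _ IH]; first exact: tam_refl.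
by apply: tam_trans IH; apply: tam_right.
Qed.

Lemma nodes_step s t : tam_step s t -> nodes s = nodes t.
Proof. by elim=> /= *; lia. Qed.

Fixpoint pot (t : bt) : nat :=
  match t with Lf => 0 | Nd l r => pot l + pot r + nodes l end.

Lemma pot_step s t : tam_step s t -> pot s < pot t.
Proof.
elim=> /= [A B C|l l' r H IH|l r r' H IH]; try lia.
by rewrite (nodes_step H); lia.
Qed.

Lemma pot_le s t : tam_le s t -> s = t \/ pot s < pot t.
Proof.
elim=> [x|x y z H _ [<-|IH]]; [by left|right; exact: pot_step|].
right; have := pot_step H; lia.
Qed.

Lemma tam_antisym s t : tam_le s t -> tam_le t s -> s = t.
Proof.
move=> /pot_le [//|H1] /pot_le [E|H2]; first by rewrite E.
lia.
Qed.

Lemma tsplitl0 t : tsplitl 0 t = Lf.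
Proof. by elim: t => //= l IHl r _. Qed.
Lemma tsplitr0 t : tsplitr 0 t = t.
Proof. by elim: t => //= l IHl r _; rewrite IHl. Qed.

Lemma tsplitl_big t i : nodes t <= i -> tsplitl i t = t.
Proof.
elim: t i => //= l IHl r IHr i H.
case: ifP => H1; first lia.
by rewrite IHr //; lia.
Qed.

Lemma tsplitr_big t i : nodes t <= i -> tsplitr i t = Lf.
Proof.
elim: t i => //= l IHl r IHr i H.
case: ifP => H1; first lia.
by rewrite IHr //; lia.
Qed.

Lemma nodes_tover s t : nodes (tover s t) = nodes s + nodes t.
Proof. elim: t => [|l IHl r _] /=; [lia|rewrite IHl; lia]. Qed.

Lemma split_under s t :
  tsplitl (nodes s) (tunder s t) = s /\ tsplitr (nodes s) (tunder s t) = t.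
Proof.
elim: s => [|s1 _ s2 IH] /=; first by rewrite tsplitl0 tsplitr0.
case: ifP => H; first lia.
have -> : (nodes s1 + nodes s2).+1 - (nodes s1).+1 = nodes s2 by lia.
by case: IH => -> ->.
Qed.

Lemma split_over s t :
  tsplitl (nodes s) (tover s t) = s /\ tsplitr (nodes s) (tover s t) = t.
Proof.
elim: t => [|t1 IH t2 _] /=; first by split; [apply: tsplitl_big|apply: tsplitr_big].
rewrite nodes_tover; case: ifP => H; last lia.
by case: IH => -> ->.
Qed.

Lemma under_le u i : tam_le (tunder (tsplitl i u) (tsplitr i u)) u.
Proof.
have key : forall x y r, tam_le (tunder x (Nd y r)) (Nd (tunder x y) r).
  elim=> [|x1 _ x2 IH] y r /=; first exact: tam_refl.
  apply: tam_le_trans (tam_le_right _ (IH y r)) _.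
  by apply: tam_step_le; apply: tam_root.
elim: u i => [|l IHl r IHr] i /=; first exact: tam_refl.
case: ifP => H.
  exact: tam_le_trans (key _ _ _) (tam_le_left _ (IHl i)).
exact: tam_le_right.
Qed.

Lemma over_ge u i : tam_le u (tover (tsplitl i u) (tsplitr i u)).
Proof.
have key : forall y l x, tam_le (Nd l (tover x y)) (tover (Nd l x) y).
  elim=> [|y1 IH y2 _] l x /=; first exact: tam_refl.
  apply: tam_trans; first exact: tam_root.
  exact: tam_le_left.
elim: u i => [|l IHl r IHr] i /=; first exact: tam_refl.
case: ifP => H; first exact: tam_le_left.
exact: tam_le_trans (tam_le_right _ (IHr _)) (key _ _ _).
Qed.

Lemma split_step u v : tam_step u v -> forall i,
  tam_le (tsplitl i u) (tsplitl i v) /\ tam_le (tsplitr i u) (tsplitr i v).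
Proof.
elim=> [A B C|l l' r H IH|l r r' H IH] i /=.
- case: ifP => H1; case: ifP => H2; try case: ifP => H3; try case: ifP => H4;
  try (exfalso; lia); try (split; exact: tam_refl).
  + split; [exact: tam_refl| apply: tam_step_le; exact: tam_root].
  + have -> : i - (nodes A + nodes B).+2 = i - (nodes A).+1 - (nodes B).+1 by lia.
    split; [apply: tam_step_le; exact: tam_root| exact: tam_refl].
- rewrite (nodes_step H); case: ifP => H1.
    by case: (IH i) => H2 H3; split; [|apply: tam_le_left].
  by split; [apply: tam_le_left; apply: tam_step_le|exact: tam_refl].
- case: ifP => H1.
    by split; [exact: tam_refl|apply: tam_le_right; apply: tam_step_le].
  by case: (IH (i - (nodes l).+1)) => H2 H3; split; [apply: tam_le_right|].
Qed.

Lemma split_le u v : tam_le u v -> forall i,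
  tam_le (tsplitl i u) (tsplitl i v) /\ tam_le (tsplitr i u) (tsplitr i v).
Proof.
move=> Huv; elim: Huv => [t|x y z H _ IH] i; first by split; exact: tam_refl.
case: (split_step H i) => H1 H2; case: (IH i) => H3 H4.
split; [exact: tam_le_trans H1 H3|exact: tam_le_trans H2 H4].
Qed.

Lemma tree_part s t u :
  (tam_le (tunder s t) u /\ tam_le u (tover s t)) <->
  (tsplitl (nodes s) u = s /\ tsplitr (nodes s) u = t).
Proof.
split.
  case=> H1 H2.
  case: (split_le H1 (nodes s)) => H3 H4.
  case: (split_le H2 (nodes s)) => H5 H6.
  case: (split_under s t) => E1 E2; case: (split_over s t) => E3 E4.
  rewrite E1 E2 in H3 H4; rewrite E3 E4 in H5 H6.
  by split; apply: tam_antisym.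
case=> E1 E2; split.
  by have := under_le u (nodes s); rewrite E1 E2.
by have := over_ge u (nodes s); rewrite E1 E2.
Qed.


Lemma perm_mem_bound s x : is_perm s -> x \in s -> 0 < x <= size s.
Proof.
by rewrite /is_perm => /perm_mem -> ; rewrite mem_iota; lia.
Qed.

Lemma perm_uniq' s : is_perm s -> uniq s.
Proof. by move=> /perm_uniq ->; apply: iota_uniq. Qed.

Lemma count_lt_perm s x : is_perm s -> x \in s -> count (fun y => y < x) s = x.-1.
Proof.
move=> Hp Hx; have [H0 H1] := andP (perm_mem_bound Hp Hx).
rewrite (permP Hp) -size_filter.
have -> : x = 1 + x.-1 by lia.
by rewrite filter_iota_ltn ?size_iota //; lia.
Qed.

Lemma std_perm s : is_perm s -> std s = s.
Proof.
move=> Hp; rewrite /std; apply: map_id_in => x Hx.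
rewrite count_lt_perm //; have := perm_mem_bound Hp Hx; lia.
Qed.

Lemma count_lt_le w x y : x <= y -> count (fun z => z < x) w <= count (fun z => z < y) w.
Proof. by move=> Hxy; apply: sub_count => z /= Hz; apply: leq_trans Hz Hxy. Qed.

Lemma count_lt_strict w x y : x < y -> x \in w ->
  count (fun z => z < x) w < count (fun z => z < y) w.
Proof.
move=> Hxy; elim: w => //= z w IH; rewrite in_cons => /orP [/eqP <-|Hx].
  rewrite ltnn Hxy add0n add1n ltnS; apply: count_lt_le; lia.
have := IH Hx; case Hzx: (z < x); case Hzy: (z < y); rewrite /= ?add0n ?add1n; lia.
Qed.

Lemma count_lt_mono w x y : x \in w ->
  (count (fun z => z < x) w < count (fun z => z < y) w) = (x < y).
Proof.
move=> Hx; case: (ltnP x y) => H; first exact: count_lt_strict.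
by apply/negbTE; rewrite -leqNgt; apply: count_lt_le.
Qed.

Definition pat (w s : seq nat) := forall j k, j < size s -> k < size s ->
  (nth 0 w j < nth 0 w k) = (nth 0 s j < nth 0 s k).

Lemma nth_std w j : j < size w -> nth 0 (std w) j = (count (fun y => y < nth 0 w j) w).+1.
Proof. by move=> Hj; rewrite /std (nth_map 0). Qed.

Lemma std_pat w s : is_perm s -> size w = size s -> (std w = s <-> pat w s).
Proof.
move=> Hp Hsz; split.
  move=> <- j k Hj Hk; rewrite size_map in Hj Hk.
  by rewrite !nth_std // ltnS count_lt_mono // mem_nth.
move=> Hpat; rewrite -[RHS](std_perm Hp).
apply: (@eq_from_nth _ 0); first by rewrite !size_map.
move=> k; rewrite size_map => Hk.
rewrite nth_std // nth_std -?Hsz //; congr S.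
have E : forall t x, count (fun y => y < x) t =
    count (fun i => nth 0 t i < x) (iota 0 (size t)).
  by move=> t x; rewrite -{1}(mkseq_nth 0 t) /mkseq count_map.
rewrite !E Hsz.
apply: eq_in_count => j; rewrite mem_iota /= => Hj.
by apply: Hpat; rewrite -?Hsz //; lia.
Qed.

Lemma lt_swap (w : seq nat) j k : uniq w -> j < size w -> k < size w -> j != k ->
  (nth 0 w j < nth 0 w k) = ~~ (nth 0 w k < nth 0 w j).
Proof.
move=> Hu Hj Hk Hjk; rewrite -leqNgt [RHS]leq_eqVlt.
by rewrite (nth_uniq 0 Hj Hk Hu) (negbTE Hjk).
Qed.

Lemma pat_of_inv (w s : seq nat) : uniq w -> uniq s -> size w = size s ->
  (forall i j, i < j < size s -> (nth 0 w j < nth 0 w i) = (nth 0 s j < nth 0 s i)) ->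
  pat w s.
Proof.
move=> Hw Hs Hsz H j k Hj Hk.
have Hj' : j < size w by rewrite Hsz.
have Hk' : k < size w by rewrite Hsz.
case: (ltngtP j k) => Hjk.
- have Hn : j != k by rewrite neq_ltn Hjk.
  rewrite (lt_swap Hw Hj' Hk' Hn) (lt_swap Hs Hj Hk Hn).
  by rewrite H // Hjk Hk.
- by rewrite (H k j) // Hjk Hj.
- by rewrite Hjk !ltnn.
Qed.

Lemma nth_under s t i : i < size s + size t ->
  nth 0 (s ++ [seq x + size s | x <- t]) i =
  if i < size s then nth 0 s i else nth 0 t (i - size s) + size s.
Proof.
move=> Hi; rewrite nth_cat; case: ifP => // H.
by rewrite (nth_map 0) //; lia.
Qed.

Lemma nth_over s t i : i < size s + size t ->
  nth 0 ([seq x + size t | x <- s] ++ t) i =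
  if i < size s then nth 0 s i + size t else nth 0 t (i - size s).
Proof.
move=> Hi; rewrite nth_cat size_map; case: ifP => // H.
by rewrite (nth_map 0).
Qed.

Lemma perm_nth_bound s k : is_perm s -> k < size s -> 0 < nth 0 s k <= size s.
Proof. by move=> Hp Hk; apply: perm_mem_bound => //; apply: mem_nth. Qed.

Lemma perm_part s t p : is_perm s -> is_perm t -> is_perm p ->
 (weak_le (s ++ [seq x + size s | x <- t]) p /\ weak_le p ([seq x + size t | x <- s] ++ t)) <->
 (size p = size s + size t /\ std (take (size s) p) = s /\ std (drop (size s) p) = t).
Proof.
move=> Hs Ht Hp.
have Bs := perm_nth_bound Hs; have Bt := perm_nth_bound Ht.
split.
- case=> [[Hn W1] [_ W2]].
  rewrite size_cat size_map in Hn W1; rewrite -Hn in W2.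
  have Hsz1 : size (take (size s) p) = size s by rewrite size_takel // -Hn leq_addr.
  have Hsz2 : size (drop (size s) p) = size t by rewrite size_drop -Hn addKn.
  split => //; split.
  + apply/(std_pat Hs Hsz1)/pat_of_inv => //.
    * by apply: take_uniq; apply: perm_uniq'.
    * exact: perm_uniq'.
    * move=> i j /andP [Hij Hj].
      have Hi : i < size s := ltn_trans Hij Hj.
      rewrite !nth_take //.
      have Hij' : i < j < size s + size t.
        by rewrite Hij /=; apply: (leq_trans Hj); apply: leq_addr.
      have Hj' : j < size s + size t by case/andP: Hij'.
      have Hi' : i < size s + size t by apply: ltn_trans Hj'.
      apply/idP/idP => H.
      - move: (W2 i j Hij' H); rewrite !nth_over // Hj Hi.
        by rewrite ltn_add2r.
      - move: (W1 i j Hij'); rewrite !nth_under // Hj Hi.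
        by apply.
  + apply/(std_pat Ht Hsz2)/pat_of_inv => //.
    * by apply: drop_uniq; apply: perm_uniq'.
    * exact: perm_uniq'.
    * move=> i j /andP [Hij Hj].
      rewrite !nth_drop.
      have Hi : i < size t by lia.
      have F : forall k, (size s + k < size s) = false.
        by move=> k; apply/negbTE; rewrite -leqNgt leq_addr.
      have Hij' : size s + i < size s + j < size s + size t by apply/andP; split; lia.
      apply/idP/idP => H.
      - move: (W2 _ _ Hij' H); rewrite !nth_over; try lia.
        by rewrite !F !addKn.
      - move: (W1 _ _ Hij'); rewrite !nth_under; try lia.
        rewrite !F !addKn ltn_add2r.
        by apply.
- case=> Hn [E1 E2].
  have Hsz1 : size (take (size s) p) = size s by rewrite size_takel // Hn leq_addr.
  have Hsz2 : size (drop (size s) p) = size t by rewrite size_drop Hn addKn.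
  have P1 := (std_pat Hs Hsz1).1 E1.
  have P2 := (std_pat Ht Hsz2).1 E2.
  split; split.
  + by rewrite size_cat size_map Hn.
  + move=> i j /andP [Hij Hj]; rewrite size_cat size_map in Hj.
    rewrite !nth_under //; try lia.
    case: (ltnP j (size s)) => Hja.
      have Hia : i < size s by lia.
      rewrite Hia => H.
      by have := P1 j i Hja Hia; rewrite !nth_take // H.
    case: (ltnP i (size s)) => Hia.
      have := Bs i Hia; lia.
    rewrite ltn_add2r => H.
    have := P2 (j - size s) (i - size s); rewrite !nth_drop H.
    have -> : size s + (j - size s) = j by lia.
    have -> : size s + (i - size s) = i by lia.
    by apply; lia.
  + by rewrite size_cat size_map Hn.
  + move=> i j /andP [Hij Hj]; rewrite Hn in Hj.
    rewrite !nth_over //; try lia.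
    case: (ltnP j (size s)) => Hja.
      have Hia : i < size s by lia.
      rewrite Hia ltn_add2r => H.
      by have := P1 j i Hja Hia; rewrite !nth_take // H.
    case: (ltnP i (size s)) => Hia.
      have := Bt (j - size s); have := Bs i Hia; lia.
    move=> H.
    have := P2 (j - size s) (i - size s); rewrite !nth_drop.
    have -> : size s + (j - size s) = j by lia.
    have -> : size s + (i - size s) = i by lia.
    by move=> <- //; lia.
Qed.


Lemma P_size f g h i : i <= pdeg h ->
  (psplitl i h == f) && (psplitr i h == g) -> i = pdeg f /\ pdeg h = pdeg f + pdeg g.
Proof.
move=> Hi /andP [/eqP E1 /eqP E2].
have := congr1 (fun x : pfun => size x.1) E1; have := congr1 (fun x : pfun => size x.1) E2.
rewrite /= !size_map size_drop size_takel // /pdeg => <- <-.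
rewrite /pdeg in Hi; lia.
Qed.

Lemma coef_char f g h : dual_prod_coef f g h =
  ((pdeg h == pdeg f + pdeg g) && (psplitl (pdeg f) h == f) && (psplitr (pdeg f) h == g)).
Proof.
rewrite /dual_prod_coef.
set c := (_ && _ && _).
rewrite (@eq_in_count _ _ (fun i => (i == pdeg f) && c)); last first.
  move=> i; rewrite mem_iota add0n ltnS /= => Hi.
  case: (eqVneq i (pdeg f)) => [E|Hne] /=.
    rewrite /c -E; case Hp: (_ && _); last by rewrite -andbA Hp andbF.
    have [_ E2] := P_size Hi Hp.
    by rewrite -andbA Hp andbT E2 E eqxx.
  apply/negP => Hp; move/eqP: Hne; apply; exact: (P_size Hi Hp).1.
case Hc: c; last by rewrite (eq_count (a2 := pred0)) ?count_pred0 // => i; rewrite andbF.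
rewrite (eq_count (a2 := pred1 (pdeg f))) => [|i]; last by rewrite andbT.
rewrite count_uniq_mem ?iota_uniq // mem_iota.
have : c by rewrite Hc.
rewrite /c => H; move: (H) => /andP [H1 _]; move: H1 => /andP [/eqP E _].
rewrite E; lia.
Qed.

Lemma key_equiv f g h : is_pf f -> is_pf g -> is_pf h ->
  (park_le (punder f g) h /\ park_le h (pover f g)) <->
  ((pdeg h == pdeg f + pdeg g) && (psplitl (pdeg f) h == f) && (psplitr (pdeg f) h == g)).
Proof.
case: f => s1 s2; case: g => t1 t2; case: h => p1 p2.
case/and3P => Ps1 /eqP Ns1 _; case/and3P => Pt1 _ _; case/and3P => Pp1 _ _.
rewrite /park_le /punder /pover /pdeg /psplitl /psplitr /=.
have PP := perm_part Ps1 Pt1 Pp1.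
have TT := tree_part s2 t2 p2; rewrite Ns1 in TT.
split.
  case=> [[W1 T1] [W2 T2]].
  have [Hn [E1 E2]] := PP.1 (conj W1 W2).
  have [E3 E4] := TT.1 (conj T1 T2).
  by rewrite Hn E1 E2 E3 E4 !eqxx.
move/andP => [/andP [/eqP Hn /eqP E12] /eqP E34].
case: E12 => E1 E3; case: E34 => E2 E4.
have [W1 W2] := PP.2 (conj Hn (conj E1 E2)).
have [T1 T2] := TT.2 (conj E3 E4).
by split; split.
Qed.

Unset Implicit Arguments.

Theorem mainTheorem13 (f g h : pfun) :
  is_pf f -> is_pf g -> is_pf h ->
  ((park_le (punder f g) h /\ park_le h (pover f g)) -> dual_prod_coef f g h = 1) /\
  (~ (park_le (punder f g) h /\ park_le h (pover f g)) -> dual_prod_coef f g h = 0).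
Proof.
move=> Hf Hg Hh; have K := key_equiv Hf Hg Hh.
rewrite coef_char; split.
  by move=> /K ->.
move=> Hn; case E: (_ && _ && _) => //.
by exfalso; apply: Hn; apply/K; rewrite E.
Qed.
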